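(* Let $K$ be a field, $\mathcal A$ a $K$-algebra, $\vartheta$ any one of the four types (left, right, pre-two-sided, two-sided), and $0\neq a\in\mathcal A$. Then the one-dimensional subspace $Ka$ is a $\vartheta$-Mathieu subspace of $\mathcal A$ if and only if one of the following holds: (1) $Ka$ is a $\vartheta$-ideal of $\mathcal A$, equivalently $Ka=(a)_\vartheta$; (2) $a$ is not a quasi-idempotent of $\mathcal A$.
   Context: All algebras are associative and unital. $a$ is a quasi-idempotent if $a^2=ra$ for some $r\in K^\times$. A $\vartheta$-ideal is a left ideal if $\vartheta$ = left, right ideal if $\vartheta$ = right, two-sided ideal if $\vartheta$ is pre-two-sided or two-sided. $(x)_\vartheta$ is $\mathcal Ax$ if $\vartheta$ = left, $x\mathcal A$ if right, the two-sided ideal generated by $x$ if two-sided, and $x\mathcal A+\mathcal Ax$ if pre-two-sided. A $K$-subspace $V$ is a left (resp. right) Mathieu subspace if whenever $b\in\mathcal A$ satisfies $b^m\in V$ for all $m\ge1$, then for every $c\in\mathcal A$, $cb^m\in V$ (resp. $b^mc\in V$) for all sufficiently large $m$; pre-two-sided if both left and right; two-sided if whenever $b^m\in V$ for all $m\ge1$, then for all $c,d\in\mathcal A$, $cb^md\in V$ for all sufficiently large $m$. *)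

(* Defs.v *)
From HB Require Import structures.
From mathcomp Require Import all_boot all_order all_algebra.
Set Implicit Arguments. Unset Strict Implicit. Unset Printing Implicit Defensive.
Import GRing.Theory.
Local Open Scope ring_scope.

Inductive mtype := MLeft | MRight | MPreTwo | MTwo.

Section Defs.
Variables (K : fieldType) (A : algType K).

Definition line (a : A) : A -> Prop := fun x => exists k : K, x = k *: a.

Definition quasi_idempotent (a : A) : Prop :=
  exists r : K, r != 0 /\ a * a = r *: a.

Definition additive_subgroup (V : A -> Prop) : Prop :=
  V 0 /\ (forall x y, V x -> V y -> V (x - y)).

Definition is_left_ideal (V : A -> Prop) : Prop :=
  additive_subgroup V /\ (forall c x, V x -> V (c * x)).
Definition is_right_ideal (V : A -> Prop) : Prop :=
  additive_subgroup V /\ (forall c x, V x -> V (x * c)).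
Definition is_twosided_ideal (V : A -> Prop) : Prop :=
  additive_subgroup V /\ (forall c x, V x -> V (c * x)) /\
  (forall c x, V x -> V (x * c)).

Definition is_ideal (t : mtype) (V : A -> Prop) : Prop :=
  match t with
  | MLeft => is_left_ideal V
  | MRight => is_right_ideal V
  | MPreTwo | MTwo => is_twosided_ideal V
  end.

Definition all_powers_in (V : A -> Prop) (b : A) : Prop :=
  forall m : nat, (1 <= m)%N -> V (b ^+ m).

Definition left_mathieu (V : A -> Prop) : Prop :=
  forall b, all_powers_in V b ->
  forall c, exists N : nat, forall m, (N <= m)%N -> V (c * b ^+ m).
Definition right_mathieu (V : A -> Prop) : Prop :=
  forall b, all_powers_in V b ->
  forall c, exists N : nat, forall m, (N <= m)%N -> V (b ^+ m * c).
Definition twosided_mathieu (V : A -> Prop) : Prop :=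
  forall b, all_powers_in V b ->
  forall c d, exists N : nat, forall m, (N <= m)%N -> V (c * b ^+ m * d).

Definition is_mathieu (t : mtype) (V : A -> Prop) : Prop :=
  match t with
  | MLeft => left_mathieu V
  | MRight => right_mathieu V
  | MPreTwo => left_mathieu V /\ right_mathieu V
  | MTwo => twosided_mathieu V
  end.
End Defs.

(* Main.v *)
Require Import Defs.
From Stdlib Require Import Classical.
From mathcomp Require Import all_boot all_order all_algebra.
Local Open Scope ring_scope.
Import GRing.Theory.

Section Aux.
Variables (K : fieldType) (A : algType K).
Implicit Types (a b c d x : A).

Lemma line_add_sub (a : A) : additive_subgroup (line a).
Proof.
split; first by exists 0; rewrite scale0r.
by move=> x y [k ->] [l ->]; exists (k - l); rewrite scalerBl.
Qed.

Lemma line0 (a : A) : line a 0.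
Proof. by exists 0; rewrite scale0r. Qed.

Lemma line_scale (a x : A) (k : K) : line a x -> line a (k *: x).
Proof. by move=> [l ->]; exists (k * l); rewrite scalerA. Qed.

Lemma nq_pow (a b : A) : ~ quasi_idempotent a -> all_powers_in (line a) b ->
  forall m, (2 <= m)%N -> b ^+ m = 0.
Proof.
move=> nq hp m hm.
have b20 : b ^+ 2 = 0.
  have [k hb] := hp 1%N isT; rewrite expr1 in hb.
  have [l hl] := hp 2%N isT.
  have [k0|k0] := eqVneq k 0.
    by rewrite hb k0 scale0r expr0n.
  have [l0|l0] := eqVneq l 0; first by rewrite hl l0 scale0r.
  exfalso; apply: nq; exists (k ^- 2 * l); split.
    by rewrite mulf_neq0 // invr_eq0 expf_neq0.
  move: hl; rewrite hb exprZn -expr2 => hl.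
  by rewrite -scalerA -hl scalerA mulVf ?expf_neq0 // scale1r.
by rewrite -(subnK hm) exprD b20 mulr0.
Qed.

Lemma idem_pow (e : A) : e * e = e -> forall m, (1 <= m)%N -> e ^+ m = e.
Proof.
move=> he; case=> // m _; elim: m => [|m IH]; first by rewrite expr1.
by rewrite exprS IH he.
Qed.

Lemma quasi_e (a : A) (r : K) : r != 0 -> a * a = r *: a ->
  let e := r^-1 *: a in e * e = e.
Proof.
move=> r0 ha /=.
rewrite -scalerAl -scalerAr ha !scalerA.
by rewrite -mulrA mulVf // mulr1.
Qed.

End Aux.

Theorem proposition4p8 (K : fieldType) (A : algType K) (t : mtype) (a : A) :
  a != 0 ->
  (is_mathieu t (line a) <-> (is_ideal t (line a) \/ ~ quasi_idempotent a)).
Proof.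
move=> a0; split.
- move=> hM; case: (classic (quasi_idempotent a)); last by right.
  move=> [r [r0 ha]]; left.
  set e := r^-1 *: a.
  have he := @quasi_e K A a r r0 ha; rewrite -/e in he.
  have hp : all_powers_in (line a) e.
    by move=> m hm; rewrite idem_pow //; exists r^-1.
  have eK : a = r *: e by rewrite /e scalerA mulfV // scale1r.
  have Lc : (forall c, line a (c * e)) -> forall c x, line a x -> line a (c * x).
    move=> H c x [k ->]; rewrite -scalerAr [X in c * X]eK -scalerAr.
    by apply: line_scale; apply: line_scale; apply: H.
  have Rc : (forall c, line a (e * c)) -> forall c x, line a x -> line a (x * c).
    move=> H c x [k ->]; rewrite -scalerAl [X in X * c]eK -scalerAl.
    by apply: line_scale; apply: line_scale; apply: H.
  have fromL : left_mathieu (line a) -> forall c, line a (c * e).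
    move=> hL c; have [N HN] := hL e hp c.
    by have := HN (maxn N 1) (leq_maxl _ _); rewrite idem_pow // leq_maxr.
  have fromR : right_mathieu (line a) -> forall c, line a (e * c).
    move=> hR c; have [N HN] := hR e hp c.
    by have := HN (maxn N 1) (leq_maxl _ _); rewrite idem_pow // leq_maxr.
  have AS := @line_add_sub K A a.
  case: t hM => /= hM.
  + by split => //; apply: Lc; apply: fromL.
  + by split => //; apply: Rc; apply: fromR.
  + by case: hM => hL hR; split => //; split; [apply: Lc; apply: fromL | apply: Rc; apply: fromR].
  + have hL : forall c, line a (c * e).
      move=> c; have [N HN] := hM e hp c 1.
      by have := HN (maxn N 1) (leq_maxl _ _); rewrite idem_pow ?leq_maxr // mulr1.
    have hR : forall c, line a (e * c).
      move=> c; have [N HN] := hM e hp 1 c.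
      by have := HN (maxn N 1) (leq_maxl _ _); rewrite idem_pow ?leq_maxr // mul1r.
    by split => //; split; [apply: Lc | apply: Rc].
- case=> [hI|nq].
  + case: t hI => /= hI.
    * by case: hI => _ hL b hp c; exists 1%N => m hm; apply: hL; apply: hp.
    * by case: hI => _ hR b hp c; exists 1%N => m hm; apply: hR; apply: hp.
    * case: hI => _ [hL hR]; split.
        by move=> b hp c; exists 1%N => m hm; apply: hL; apply: hp.
      by move=> b hp c; exists 1%N => m hm; apply: hR; apply: hp.
    * case: hI => _ [hL hR] b hp c d; exists 1%N => m hm.
      by apply: hR; apply: hL; apply: hp.
  + have z := fun b => @nq_pow K A a b nq.
    case: t => /=.
    * by move=> b hp c; exists 2%N => m hm; rewrite z // mulr0; apply: line0.
    * by move=> b hp c; exists 2%N => m hm; rewrite z // mul0r; apply: line0.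
    * split.
        by move=> b hp c; exists 2%N => m hm; rewrite z // mulr0; apply: line0.
      by move=> b hp c; exists 2%N => m hm; rewrite z // mul0r; apply: line0.
    * by move=> b hp c d; exists 2%N => m hm; rewrite z // mulr0 mul0r; apply: line0.
Qed.
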